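(* Let $\xi$ be a positive integer-valued random variable with $\xi\ge1$ almost surely, let $\alpha\in(0,1]$ with $\mathbb{E}[\xi]\alpha>1$, and let $q$ be the extinction probability of a Galton--Watson process whose offspring distribution $\zeta$ is $\mathrm{Bin}(\xi,\alpha)$ (i.e., given $\xi$, $\zeta$ is binomial with parameters $\xi$ and $\alpha$). Then $$q\le\frac{1-\alpha}{1-\mathbb{E}\big[(1-\alpha)^\xi\big]-\mathbb{E}\big[\xi\alpha(1-\alpha)^{\xi-1}\big]}.$$ *)

(* Defs.v *)
From Stdlib Require Import Reals Lra Lia.
From Coquelicot Require Import Coquelicot.
Open Scope R_scope.

(* Offspring law of zeta ~ Bin(xi, alpha), where p m = P(xi = m):
   P(zeta = k) = sum_m P(xi = m) * C(m,k) alpha^k (1-alpha)^(m-k)  (0 if k > m). *)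
Definition binom_pmf (m k : nat) (a : R) : R :=
  if Nat.leb k m then Binomial.C m k * a ^ k * (1 - a) ^ (m - k) else 0.

Definition mixed_binom (p : nat -> R) (a : R) (k : nat) : R :=
  Series (fun m => p m * binom_pmf m k a).

Fixpoint conv_pow (off : nat -> R) (j : nat) : nat -> R :=
  match j with
  | O => fun k => if Nat.eqb k 0 then 1 else 0
  | S j' => fun k => sum_f_R0 (fun i => conv_pow off j' i * off (k - i)%nat) k
  end.

(* Law of the generation size Z_n of a Galton--Watson process with Z_0 = 1
   and offspring law off:  P(Z_{n+1} = k) = sum_j P(Z_n = j) P(S_j = k). *)
Fixpoint gw_law (off : nat -> R) (n : nat) : nat -> R :=
  match n with
  | O => fun k => if Nat.eqb k 1 then 1 else 0
  | S n' => fun k => Series (fun j => gw_law off n' j * conv_pow off j k)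
  end.

(* Extinction probability P(exists n, Z_n = 0) = lim_n P(Z_n = 0)
   (the events {Z_n = 0} increase in n). *)
Definition extinction_prob (off : nat -> R) : R :=
  real (Lim_seq (fun n => gw_law off n 0%nat)).

(* Main.v *)
Require Import Defs.
From Stdlib Require Import Reals Lra Lia.
From Coquelicot Require Import Coquelicot.
Open Scope R_scope.

Lemma ser_bnd (f : nat -> R) (M : R) :
  (forall n, 0 <= f n) -> (forall N, sum_f_R0 f N <= M) ->
  ex_series f /\ Series f <= M.
Proof.
  intros H0 HM.
  destruct (growing_cv (sum_f_R0 f)) as [l Hl].
  - intro n; simpl; specialize (H0 (S n)); lra.
  - exists M; intros x [n ->]; apply HM.
  - assert (Hs : is_series f l) by (apply is_series_Reals; exact Hl).
    split; [exists l; exact Hs|].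
    rewrite (is_series_unique _ _ Hs).
    apply Rnot_lt_le; intro Hlt.
    destruct (Hl (l - M)) as [N HN]; [lra|].
    specialize (HN N (le_n _)); specialize (HM N).
    unfold R_dist in HN; apply Rabs_def2 in HN; lra.
Qed.

Lemma psum_le_ser (f : nat -> R) (N : nat) :
  (forall n, 0 <= f n) -> ex_series f -> sum_f_R0 f N <= Series f.
Proof.
  intros H0 Hf. apply sum_incr; [|exact H0].
  apply is_series_Reals. apply Series_correct. exact Hf.
Qed.

Lemma ser_ge0 (f : nat -> R) : (forall n, 0 <= f n) -> 0 <= Series f.
Proof.
  intros H0. unfold Series.
  destruct (Lim_seq (sum_n f)) eqn:E; simpl; try lra.
  assert (Rbar_le 0 (Lim_seq (sum_n f))).
  { rewrite <- (Lim_seq_const 0). apply Lim_seq_le_loc. exists O. intros n _.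
    rewrite sum_n_Reals. apply cond_pos_sum; auto. }
  rewrite E in H; simpl in H; exact H.
Qed.

Lemma ex_ser_cmp (f g : nat -> R) :
  (forall n, 0 <= f n <= g n) -> ex_series g -> ex_series f.
Proof.
  intros H Hg. apply (ex_series_le f g); auto.
  intro n; change (Rabs (f n) <= g n); rewrite Rabs_pos_eq; apply H.
Qed.

Lemma psum_nonneg (f : nat -> R) N : (forall n, 0 <= f n) -> 0 <= sum_f_R0 f N.
Proof. intros; apply cond_pos_sum; auto. Qed.

Lemma psum_mono (f : nat -> R) N M : (forall n, 0 <= f n) -> (N <= M)%nat ->
  sum_f_R0 f N <= sum_f_R0 f M.
Proof.
  intros H0 HNM. induction HNM; [lra|]. simpl. specialize (H0 (S m)); lra.
Qed.

Lemma term_le_psum (f : nat -> R) i N : (forall n, 0 <= f n) -> (i <= N)%nat ->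
  f i <= sum_f_R0 f N.
Proof.
  intros H0 H. apply Rle_trans with (sum_f_R0 f i).
  - destruct i; simpl; [lra|]. pose proof (psum_nonneg f i H0); lra.
  - apply psum_mono; auto.
Qed.

Lemma tri_exch (u v : nat -> R) K :
  sum_f_R0 (fun k => sum_f_R0 (fun i => u i * v (k - i)%nat) k) K =
  sum_f_R0 (fun i => u i * sum_f_R0 v (K - i)) K.
Proof.
  induction K.
  - simpl. ring.
  - simpl sum_f_R0 at 1. rewrite IHK. simpl.
    rewrite Nat.sub_diag.
    assert (E : sum_f_R0 (fun i => u i * sum_f_R0 v (S K - i)) K =
                sum_f_R0 (fun i => u i * sum_f_R0 v (K - i)) K +
                sum_f_R0 (fun i => u i * v (S K - i)%nat) K).
    { rewrite <- sum_plus. apply sum_eq. intros i Hi.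
      replace (S K - i)%nat with (S (K - i)) by lia. simpl. ring. }
    change (S K - 0)%nat with (S K) in E. change (fun i => u i * sum_f_R0 v (S K - i)) with (fun i => u i * sum_f_R0 v match i with 0%nat => S K | S l => (K - l)%nat end) in E. change (fun i => u i * v (S K - i)%nat) with (fun i => u i * v match i with 0%nat => S K | S l => (K - l)%nat end) in E. rewrite E. simpl. ring.
Qed.

Lemma tri_le_sq (u v : nat -> R) K :
  (forall n, 0 <= u n) -> (forall n, 0 <= v n) ->
  sum_f_R0 (fun k => sum_f_R0 (fun i => u i * v (k - i)%nat) k) K <=
  sum_f_R0 u K * sum_f_R0 v K.
Proof.
  intros Hu Hv. rewrite tri_exch. rewrite (Rmult_comm (sum_f_R0 u K)), (scal_sum u K (sum_f_R0 v K)).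
  apply sum_Rle. intros i Hi. apply Rmult_le_compat_l; auto.
  apply psum_mono; auto; lia.
Qed.

Lemma sum_series (f : nat -> nat -> R) K :
  (forall k, ex_series (fun j => f j k)) ->
  sum_f_R0 (fun k => Series (fun j => f j k)) K =
  Series (fun j => sum_f_R0 (fun k => f j k) K) /\
  ex_series (fun j => sum_f_R0 (fun k => f j k) K).
Proof.
  intros Hk. induction K.
  - simpl. split; auto.
  - destruct IHK as [E Ex]. simpl. split.
    + rewrite E. rewrite <- Series_plus; auto.
    + apply (ex_series_plus (V:=R_NormedModule)); auto.
Qed.
From Stdlib Require Import Reals Lra Lia.
From Coquelicot Require Import Coquelicot.
Open Scope R_scope.

Lemma conv_nonneg (off : nat -> R) : (forall k, 0 <= off k) ->
  forall j k, 0 <= conv_pow off j k.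
Proof.
  intros H0 j. induction j; intro k; simpl.
  - destruct (Nat.eqb k 0); lra.
  - apply psum_nonneg. intro i. apply Rmult_le_pos; auto.
Qed.

Lemma conv_zero (off : nat -> R) j : conv_pow off j 0 = off 0%nat ^ j.
Proof. induction j; simpl; [reflexivity|]. rewrite IHj. ring. Qed.

Lemma conv_psum (off : nat -> R) (s B : R) : (forall k, 0 <= off k) -> 0 <= s ->
  (forall N, sum_f_R0 (fun k => off k * s ^ k) N <= B) ->
  forall j K, sum_f_R0 (fun k => conv_pow off j k * s ^ k) K <= B ^ j.
Proof.
  intros H0 Hs HB j. induction j; intro K.
  - simpl. induction K; simpl; [lra|]. lra.
  - assert (E : sum_f_R0 (fun k => conv_pow off (S j) k * s ^ k) K =
      sum_f_R0 (fun k => sum_f_R0 (fun i => (conv_pow off j i * s ^ i) *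
             (off (k - i)%nat * s ^ (k - i))) k) K).
    { apply sum_eq. intros k Hk. simpl. rewrite Rmult_comm, scal_sum. apply sum_eq.
      intros i Hi. replace (s ^ k) with (s ^ i * s ^ (k - i)) by (rewrite <- pow_add; f_equal; lia).
      ring. }
    rewrite E. eapply Rle_trans.
    + apply (tri_le_sq (fun i => conv_pow off j i * s ^ i) (fun l => off l * s ^ l)).
      * intro n; apply Rmult_le_pos; [apply conv_nonneg; auto| apply pow_le; auto].
      * intro n; apply Rmult_le_pos; [auto| apply pow_le; auto].
    + simpl. rewrite Rmult_comm. apply Rmult_le_compat; auto.
      * apply psum_nonneg. intro n; apply Rmult_le_pos; [auto| apply pow_le; auto].
      * apply psum_nonneg. intro n; apply Rmult_le_pos; [apply conv_nonneg; auto| apply pow_le; auto].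
Qed.

Lemma pow_le1' (B : R) j : 0 <= B <= 1 -> B ^ j <= 1.
Proof. intros H. induction j; simpl; [lra|]. assert (0 <= B ^ j) by (apply pow_le; lra). nra. Qed.

Definition Good (off : nat -> R) (c : R) :=
  0 <= c <= 1 /\ forall s, 0 <= s <= c -> Series (fun k => off k * s ^ k) <= c.

Definition Inv (off : nat -> R) (g : nat -> R) :=
  (forall j, 0 <= g j) /\ ex_series g /\
  forall c, Good off c -> forall s, 0 <= s <= c -> Series (fun j => g j * s ^ j) <= c.

Lemma F_facts (off : nat -> R) s : (forall k, 0 <= off k) -> ex_series off -> Series off <= 1 ->
  0 <= s <= 1 ->
  ex_series (fun k => off k * s ^ k) /\ 0 <= Series (fun k => off k * s ^ k) <= Series off.
Proof.
  intros H0 Hex H1 Hs.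
  assert (Hb : forall k, 0 <= off k * s ^ k <= off k).
  { intro k. split. apply Rmult_le_pos; auto; apply pow_le; lra.
    rewrite <- (Rmult_1_r (off k)) at 2. apply Rmult_le_compat_l; auto. apply pow_le1'; lra. }
  split; [apply (ex_ser_cmp _ off); auto|]. split.
  - apply ser_ge0. intro; apply Hb.
  - apply Series_le; auto.
Qed.

Lemma Inv_step (off : nat -> R) g : (forall k, 0 <= off k) -> ex_series off -> Series off <= 1 ->
  Inv off g -> Inv off (fun k => Series (fun j => g j * conv_pow off j k)).
Proof.
  intros H0 Hex H1 [Hg0 [Hgex Hgb]].
  assert (HG1 : Good off 1).
  { split; [lra|]. intros s Hs. destruct (F_facts off s) as [_ [_ ?]]; auto; lra. }
  assert (Hoff0 : 0 <= Series off) by (apply ser_ge0; auto).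
  assert (Hc1 : forall j k, conv_pow off j k <= 1).
  { intros j k. pose proof (conv_psum off 1 (Series off) H0 ltac:(lra)) as P.
    assert (HB : forall N, sum_f_R0 (fun k => off k * 1 ^ k) N <= Series off).
    { intro N. rewrite (sum_eq _ off). apply psum_le_ser; auto. intros; rewrite pow1; ring. }
    specialize (P HB j k).
    eapply Rle_trans; [|apply (pow_le1' (Series off) j); lra].
    eapply Rle_trans; [|exact P].
    replace (conv_pow off j k) with (conv_pow off j k * 1 ^ k) by (rewrite pow1; ring).
    apply (term_le_psum (fun k => conv_pow off j k * 1 ^ k)); auto.
    intro; rewrite pow1, Rmult_1_r; apply conv_nonneg; auto. }
  assert (Hjk : forall k, ex_series (fun j => g j * conv_pow off j k)).
  { intro k. apply (ex_ser_cmp _ g); auto. intro j. split.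
    apply Rmult_le_pos; auto; apply conv_nonneg; auto.
    rewrite <- (Rmult_1_r (g j)) at 2. apply Rmult_le_compat_l; auto. }
  assert (PS : forall s K, 0 <= s <= 1 ->
     sum_f_R0 (fun k => Series (fun j => g j * conv_pow off j k) * s ^ k) K <=
     Series (fun j => g j * Series (fun k => off k * s ^ k) ^ j)).
  { intros s K Hs. destruct (F_facts off s) as [HFex [HF0 HF1]]; auto.
    set (Fs := Series (fun k => off k * s ^ k)) in *.
    rewrite (sum_eq _ (fun k => Series (fun j => g j * conv_pow off j k * s ^ k))).
    2:{ intros; rewrite <- Series_scal_r; reflexivity. }
    destruct (sum_series (fun j k => g j * conv_pow off j k * s ^ k) K) as [E Ex].
    { intro k. apply ex_series_scal_r. apply Hjk. }
    rewrite E. apply Series_le.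
    - intro j. split.
      + apply psum_nonneg. intro k. apply Rmult_le_pos; [apply Rmult_le_pos; auto; apply conv_nonneg; auto| apply pow_le; lra].
      + rewrite (sum_eq _ (fun k => (conv_pow off j k * s ^ k) * g j)) by (intros; ring).
        rewrite <- scal_sum. apply Rmult_le_compat_l; auto.
        apply conv_psum; auto; try lra. intro N. apply psum_le_ser; auto.
        intro; apply Rmult_le_pos; auto; apply pow_le; lra.
    - apply (ex_ser_cmp _ g); auto. intro j. split.
      apply Rmult_le_pos; auto; apply pow_le; lra.
      rewrite <- (Rmult_1_r (g j)) at 2. apply Rmult_le_compat_l; auto. apply pow_le1'; lra. }
  assert (Hnn : forall k, 0 <= Series (fun j => g j * conv_pow off j k)).
  { intro k. apply ser_ge0. intro j. apply Rmult_le_pos; auto; apply conv_nonneg; auto. }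
  split; [exact Hnn|]. split.
  - destruct (ser_bnd (fun k => Series (fun j => g j * conv_pow off j k) * 1 ^ k) 1) as [Hx _].
    + intro k; rewrite pow1, Rmult_1_r; auto.
    + intro N. eapply Rle_trans; [apply PS; lra|]. apply Hgb; auto.
      destruct (F_facts off 1) as [_ [? ?]]; auto; lra.
    + eapply ex_series_ext; [|exact Hx]. intro; simpl; rewrite pow1; ring.
  - intros c Hc s Hs. destruct Hc as [Hc01 Hcb].
    apply ser_bnd.
    + intro k; apply Rmult_le_pos; auto; apply pow_le; lra.
    + intro N. eapply Rle_trans; [apply PS; lra|]. apply Hgb; [split; auto|].
      split. destruct (F_facts off s) as [_ [? ?]]; auto; lra. apply Hcb; auto.
Qed.

Lemma g0_psum s K : sum_f_R0 (fun j => (if Nat.eqb j 1 then 1 else 0) * s ^ j) K =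
  if Nat.eqb K 0 then 0 else s.
Proof.
  induction K; simpl; [ring|]. rewrite IHK.
  destruct K; simpl; [ring|]. destruct (Nat.eqb K 0); ring.
Qed.

Lemma Inv_base (off : nat -> R) : Inv off (gw_law off 0).
Proof.
  simpl. split; [intro j; destruct (Nat.eqb j 1); lra|]. split.
  - destruct (ser_bnd (fun j => (if Nat.eqb j 1 then 1 else 0) * 1 ^ j) 1) as [Hx _].
    + intro j; destruct (Nat.eqb j 1); simpl; rewrite pow1; lra.
    + intro N; rewrite g0_psum; destruct (Nat.eqb N 0); lra.
    + eapply ex_series_ext; [|exact Hx]. intro; simpl; rewrite pow1; ring.
  - intros c Hc s Hs. apply ser_bnd.
    + intro j; destruct (Nat.eqb j 1); [rewrite Rmult_1_l; apply pow_le; lra | lra].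
    + intro N; rewrite g0_psum; destruct (Nat.eqb N 0); lra.
Qed.

Lemma ext_bound (off : nat -> R) c : (forall k, 0 <= off k) -> ex_series off -> Series off <= 1 ->
  Good off c -> off 0%nat <= c -> extinction_prob off <= c.
Proof.
  intros H0 Hex H1 Hc Hoc.
  assert (Hi : forall n, Inv off (gw_law off n)).
  { induction n; [apply Inv_base|]. apply Inv_step; auto. }
  assert (Hq : forall n, 0 <= gw_law off n 0 <= c).
  { intro n. destruct n.
    - simpl. destruct Hc; lra.
    - simpl. destruct (Hi n) as [Hg0 [_ Hgb]].
      rewrite (Series_ext _ (fun j => gw_law off n j * off 0%nat ^ j))
        by (intro; rewrite conv_zero; reflexivity).
      split.
      + apply ser_ge0. intro j. apply Rmult_le_pos; auto. apply pow_le; auto.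
      + apply Hgb; auto. }
  unfold extinction_prob.
  assert (L1 : Rbar_le 0 (Lim_seq (fun n => gw_law off n 0))).
  { rewrite <- (Lim_seq_const 0). apply Lim_seq_le_loc. exists O; intros; apply Hq. }
  assert (L2 : Rbar_le (Lim_seq (fun n => gw_law off n 0)) c).
  { rewrite <- (Lim_seq_const c). apply Lim_seq_le_loc. exists O; intros; apply Hq. }
  destruct (Lim_seq (fun n => gw_law off n 0)); simpl in *; try contradiction; auto.
Qed.

Lemma C_nonneg m k : 0 <= Binomial.C m k.
Proof.
  unfold Binomial.C. unfold Rdiv. apply Rmult_le_pos. apply pos_INR.
  apply Rlt_le, Rinv_0_lt_compat. apply Rmult_lt_0_compat; apply INR_fact_lt_0.
Qed.

Lemma C_n_1' m : Binomial.C (S m) 1 = INR (S m).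
Proof.
  unfold Binomial.C. replace (S m - 1)%nat with m by lia.
  change (Factorial.fact (S m)) with (S m * Factorial.fact m)%nat. rewrite mult_INR.
  change (Factorial.fact 1) with 1%nat. simpl (INR 1). field. apply INR_fact_neq_0.
Qed.

Section Bin.
Variable a : R.
Hypothesis ha : 0 < a <= 1.

Lemma bp_nonneg m k : 0 <= binom_pmf m k a.
Proof.
  unfold binom_pmf. destruct (Nat.leb k m); [|lra].
  apply Rmult_le_pos; [apply Rmult_le_pos|]; [apply C_nonneg|apply pow_le; lra|apply pow_le; lra].
Qed.

Lemma bp_sum_m m : sum_f_R0 (fun k => binom_pmf m k a) m = 1.
Proof.
  rewrite <- (pow1 m). replace 1 with (a + (1 - a)) at 1 by ring. rewrite binomial.
  apply sum_eq. intros i Hi. unfold binom_pmf.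
  replace (Nat.leb i m) with true by (symmetry; apply Nat.leb_le; auto). reflexivity.
Qed.

Lemma bp_sum_ext m d : sum_f_R0 (fun k => binom_pmf m k a) (m + d) = 1.
Proof.
  induction d. rewrite Nat.add_0_r; apply bp_sum_m.
  rewrite Nat.add_succ_r. simpl. rewrite IHd. unfold binom_pmf.
  replace (Nat.leb (S (m + d)) m) with false by (symmetry; apply Nat.leb_gt; lia). ring.
Qed.

Lemma bp_psum m K : sum_f_R0 (fun k => binom_pmf m k a) K <= 1.
Proof.
  rewrite <- (bp_sum_ext m K). apply psum_mono; [intro; apply bp_nonneg| lia].
Qed.

Lemma bp_le1 m k : binom_pmf m k a <= 1.
Proof.
  eapply Rle_trans; [|apply (bp_psum m k)]. apply (term_le_psum (fun k => binom_pmf m k a)); auto. intro; apply bp_nonneg.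
Qed.

Definition hh m := 1 - (1 - a) ^ m - INR m * a * (1 - a) ^ (m - 1).

Lemma hh_step m : hh (S (S m)) = hh (S m) + INR (S m) * a ^ 2 * (1 - a) ^ m.
Proof.
  unfold hh. replace (S (S m) - 1)%nat with (S m) by lia. replace (S m - 1)%nat with m by lia.
  rewrite !S_INR. simpl. ring.
Qed.

Lemma hh_ge2 m : a ^ 2 <= hh (S (S m)).
Proof.
  induction m.
  - rewrite hh_step. unfold hh. simpl. lra.
  - rewrite hh_step. assert (0 <= INR (S (S m)) * a ^ 2 * (1 - a) ^ (S m)).
    { apply Rmult_le_pos; [apply Rmult_le_pos; [apply pos_INR|apply pow_le; lra]|apply pow_le; lra]. }
    lra.
Qed.

Lemma hh_ge0 m : 0 <= hh m.
Proof.
  destruct m. unfold hh; simpl; lra.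
  destruct m. unfold hh; simpl; lra.
  pose proof (hh_ge2 m). assert (0 <= a^2) by (apply pow_le; lra). lra.
Qed.
End Bin.

Theorem lemma7 (p : nat -> R) (a : R)
  (hp_nonneg : forall m, 0 <= p m)
  (hp_sum : is_series p 1)
  (hp0 : p 0%nat = 0)
  (ha : 0 < a <= 1)
  (hmean : ~ ex_series (fun m => INR m * p m)
           \/ Series (fun m => INR m * p m) * a > 1) :
  extinction_prob (mixed_binom p a) <=
    (1 - a) /
    (1 - Series (fun m => p m * (1 - a) ^ m)
       - Series (fun m => p m * (INR m * a * (1 - a) ^ (m - 1)))).
Proof.
  set (off := mixed_binom p a).
  assert (Hpex : ex_series p) by (exists 1; auto).
  assert (Hps : Series p = 1) by (apply is_series_unique; auto).
  assert (Hmk : forall k, ex_series (fun m => p m * binom_pmf m k a)).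
  { intro k. apply (ex_ser_cmp _ p); auto. intro m. split.
    apply Rmult_le_pos; auto; apply bp_nonneg; lra.
    rewrite <- (Rmult_1_r (p m)) at 2. apply Rmult_le_compat_l; auto. apply bp_le1; lra. }
  assert (Hoff0 : forall k, 0 <= off k).
  { intro k. apply ser_ge0. intro m. apply Rmult_le_pos; auto; apply bp_nonneg; lra. }
  assert (Hoffps : forall K, sum_f_R0 off K <= 1).
  { intro K. unfold off, mixed_binom.
    destruct (sum_series (fun m k => p m * binom_pmf m k a) K Hmk) as [E _].
    rewrite E, <- Hps. apply Series_le; auto. intro m. split.
    - apply psum_nonneg. intro; apply Rmult_le_pos; auto; apply bp_nonneg; lra.
    - rewrite (sum_eq _ (fun k => binom_pmf m k a * p m)) by (intros; ring).
      rewrite <- scal_sum. rewrite <- (Rmult_1_r (p m)) at 2. apply Rmult_le_compat_l; auto.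
      apply bp_psum; lra. }
  destruct (ser_bnd off 1 Hoff0 Hoffps) as [Hoffex Hoff1].
  assert (E0 : off 0%nat = Series (fun m => p m * (1 - a) ^ m)).
  { unfold off, mixed_binom. apply Series_ext. intro m. unfold binom_pmf. simpl.
    rewrite C_n_0, Nat.sub_0_r. ring. }
  assert (E1 : off 1%nat = Series (fun m => p m * (INR m * a * (1 - a) ^ (m - 1)))).
  { unfold off, mixed_binom. apply Series_ext. intro m. unfold binom_pmf.
    destruct m. simpl. ring. simpl Nat.leb. cbv iota. rewrite C_n_1'. ring. }
  rewrite <- E0, <- E1.
  set (D := 1 - off 0%nat - off 1%nat).
  assert (HD0 : 0 <= D).
  { pose proof (Hoffps 1%nat). simpl in H. unfold D; lra. }
  assert (HD : 0 < D).
  { apply Rnot_le_lt; intro HDle.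
    assert (Ex1 : ex_series (fun m => p m * (INR m * a * (1 - a) ^ (m - 1)))).
    { eapply ex_series_ext; [|apply (Hmk 1%nat)]. intro m. unfold binom_pmf.
      destruct m. simpl. ring. simpl Nat.leb. cbv iota. rewrite C_n_1', pow_1. reflexivity. }
    assert (Ex0 : ex_series (fun m => p m * (1 - a) ^ m)).
    { eapply ex_series_ext; [|apply (Hmk 0%nat)]. intro m. unfold binom_pmf. simpl.
      rewrite C_n_0, Nat.sub_0_r. ring. }
    assert (ED : D = Series (fun m => p m * hh a m)).
    { unfold D. rewrite E0, E1.
      match goal with |- 1 - ?X - ?Y = _ => replace (1 - X - Y) with (Series p - X - Y) by (rewrite Hps; ring) end.
      rewrite <- Series_minus; auto.
      rewrite <- Series_minus; auto. apply Series_ext. intro m. unfold hh. ring.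
      apply (ex_series_minus (V:=R_NormedModule)); auto. }
    assert (Hhn : forall m, 0 <= p m * hh a m).
    { intro; apply Rmult_le_pos; auto; apply hh_ge0; lra. }
    assert (Hhex : ex_series (fun m => p m * hh a m)).
    { apply (ex_ser_cmp _ p); auto. intro m. split; auto. unfold hh.
      pose proof (bp_nonneg a ha m 0). pose proof (bp_nonneg a ha m 1).
      assert (0 <= (1 - a) ^ m) by (apply pow_le; lra).
      assert (0 <= INR m * a * (1 - a) ^ (m - 1)).
      { apply Rmult_le_pos; [apply Rmult_le_pos; [apply pos_INR|lra]|apply pow_le; lra]. }
      pose proof (hp_nonneg m). nra. }
    assert (Hp2 : forall m, p (S (S m)) = 0).
    { intro m. pose proof (hh_ge2 a ha m).
      pose proof (term_le_psum _ (S (S m)) (S (S m)) Hhn (le_n _)).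
      pose proof (psum_le_ser _ (S (S m)) Hhn Hhex).
      pose proof (hp_nonneg (S (S m))).
      assert (0 < a ^ 2) by (apply pow_lt; lra). cbv beta in *.
      assert (p (S (S m)) * a ^ 2 <= p (S (S m)) * hh a (S (S m))) by (apply Rmult_le_compat_l; auto).
      rewrite <- ED in *.
      assert (p (S (S m)) * a ^ 2 <= 0) by lra.
      destruct (Rle_lt_or_eq_dec 0 (p (S (S m)))) as [Hlt|]; auto.
      pose proof (Rmult_lt_0_compat _ _ Hlt H3). lra. }
    assert (Hmp : forall m, INR m * p m = p m).
    { intro m. destruct m. rewrite hp0; ring. destruct m. simpl; ring. rewrite Hp2; ring. }
    destruct hmean as [Hn | Hg].
    - apply Hn. eapply ex_series_ext; [|exact Hpex]. intro; rewrite Hmp; reflexivity.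
    - rewrite (Series_ext _ p) in Hg by auto. rewrite Hps in Hg. lra. }
  assert (Hb0 : off 0%nat <= 1 - a).
  { rewrite E0. apply Rle_trans with (Series p * (1 - a)); [| rewrite Hps; lra].
    rewrite <- Series_scal_r.
    apply Series_le. intro m. split.
    - apply Rmult_le_pos; auto; apply pow_le; lra.
    - destruct m. rewrite hp0; lra. apply Rmult_le_compat_l; auto.
      assert ((1 - a) ^ m <= 1) by (apply pow_le1'; lra). simpl. nra.
    - apply ex_series_scal_r; auto. }
  assert (HF : forall s, 0 <= s <= 1 ->
     Series (fun k => off k * s ^ k) <= off 0%nat + off 1%nat * s + D * s ^ 2).
  { intros s Hs.
    assert (Hind : forall K, sum_f_R0 (fun k => off k * s ^ k) (S K) <=
       off 0%nat + off 1%nat * s + s ^ 2 * (sum_f_R0 off (S K) - off 0%nat - off 1%nat)).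
    { induction K. simpl. lra.
      simpl sum_f_R0 at 1 2. simpl sum_f_R0 in IHK.
      assert (off (S (S K)) * s ^ (S (S K)) <= s ^ 2 * off (S (S K))).
      { rewrite Rmult_comm. apply Rmult_le_compat_r; auto.
        replace (S (S K)) with (2 + K)%nat by lia. rewrite pow_add.
        rewrite <- (Rmult_1_r (s ^ 2)) at 2. apply Rmult_le_compat_l.
        apply pow_le; lra. apply pow_le1'; lra. }
      simpl in *. lra. }
    apply ser_bnd.
    - intro k; apply Rmult_le_pos; auto; apply pow_le; lra.
    - intro N. destruct N.
      + simpl. assert (0 <= off 1%nat * s) by (apply Rmult_le_pos; auto; lra).
        assert (0 <= D * s ^ 2) by (apply Rmult_le_pos; auto; apply pow_le; lra). lra.
      + eapply Rle_trans; [apply Hind|]. pose proof (Hoffps (S N)).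
        assert (0 <= s ^ 2) by (apply pow_le; lra). unfold D. nra. }
  set (c := Rmin 1 ((1 - a) / D)).
  assert (Hc0 : 0 <= (1 - a) / D) by (apply Rdiv_le_0_compat; lra).
  assert (Hcb : c <= (1 - a) / D) by apply Rmin_r.
  eapply Rle_trans; [|exact Hcb].
  apply ext_bound; auto.
  - split. split. unfold c; apply Rmin_glb; lra. apply Rmin_l.
    intros s Hs. unfold c in *. destruct (Rle_dec 1 ((1 - a) / D)) as [Hle|Hlt].
    + rewrite Rmin_left in * by auto. destruct (F_facts off s) as [_ [_ ?]]; auto; lra.
    + apply Rnot_le_lt in Hlt. rewrite Rmin_right in * by lra.
      set (c' := (1 - a) / D) in *.
      assert (Hdc : D * c' = 1 - a) by (unfold c'; field; lra).
      eapply Rle_trans; [apply HF; lra|].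
      assert (0 <= off 1%nat) by auto.
      assert (off 1%nat * s <= off 1%nat * c') by (apply Rmult_le_compat_l; lra).
      assert (D * s ^ 2 <= D * c' ^ 2) by (apply Rmult_le_compat_l; [lra|]; simpl; nra).
      assert (off 0%nat + off 1%nat * c' + D * c' ^ 2 <= c').
      { unfold D in *. simpl. nra. }
      lra.
  - unfold c. destruct (Rle_dec 1 ((1 - a) / D)) as [Hle|Hlt].
    + rewrite Rmin_left by auto. pose proof (Hoffps 0%nat). simpl in H; lra.
    + apply Rnot_le_lt in Hlt. rewrite Rmin_right by lra.
      apply Rle_trans with (1 - a); auto.
      apply (Rmult_le_reg_l D); auto. replace (D * ((1 - a) / D)) with (1 - a) by (field; lra).
      assert (D <= 1) by (unfold D; pose proof (Hoff0 0%nat); pose proof (Hoff0 1%nat); lra).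
      nra.
Qed.
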